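(* Let $d>d_{\min}$, $n\in\mathbb{N}_+$, $\epsilon\in[0,1]$, and let $\mathcal{S}$ be any $(n,d,\epsilon,\mathcal{A})$ sampling (the case $k=1$). Let $(W,T,H)$ have joint law $P^{\mathcal{A}}_{H|T}P^{\mathcal{S}}_{T|W}P_W$. Then $$\epsilon \;\ge\; \sup_{\gamma\ge 0}\Big\{\mathbb{P}\big[\jmath_W(W,H,d,\mathcal{A})\ge bn+\gamma\big]-e^{-\gamma}\Big\}.$$
   Context: Framework. $\mathcal{W}$ is a countable set and $W\sim P_W$ on $\mathcal{W}$. For $k\in\mathbb{N}_+$, $W^k=(W_1,\dots,W_k)$ has i.i.d. components with law $P_W$. $\mathcal{H}$ is a countable set of hypotheses. Each training sample is described by a fixed number $b\in\mathbb{N}_+$ of bits. $\mathcal{T}_n$ denotes the set of all training datasets of size $n$, and $|\mathcal{T}_n|=2^{bn}$. A sampling strategy $\mathcal{S}$ is a Markov kernel $P^{\mathcal{S}}_{T|W^k}$ from $\mathcal{W}^k$ to training datasets. A randomized learning algorithm $\mathcal{A}$ is a fixed Markov kernel $P^{\mathcal{A}}_{H|T}$ from training datasets to $\mathcal{H}$. The hypothesis is $H=\mathcal{A}(\mathcal{S}(W^k))$, so that $W^k\to T\to H$ is a Markov chain. The distortion $\mathsf{d}:\mathcal{W}\times\mathcal{H}\to[0,\infty)$ is bounded (Assumption (I)), and $\mathsf{d}(w^k;h):=\frac1k\sum_{i=1}^k\mathsf{d}(w_i;h)$. All logarithms are natural. $(k,n,d,\epsilon,\mathcal{A})$ sampling: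 a sampling strategy $\mathcal{S}$ such that $|\mathcal{S}(W^k)|=n$ almost surely and $\mathbb{P}[\mathsf{d}(W^k;\mathcal{A}(\mathcal{S}(W^k)))>d]\le\epsilon$. For $k=1$ it is called an $(n,d,\epsilon,\mathcal{A})$ sampling. Rate-distortion quantity (for $k=1$): $$\mathbb{R}_W(d,\mathcal{A}):=\inf_{P^{\mathcal{S}}_{T|W}:\ \mathbb{E}_{P^{\mathcal{A}}_{H|T}P^{\mathcal{S}}_{T|W}P_W}[\mathsf{d}(W;H)]\le d}\ \mathbb{I}(W;H).$$ $d_{\min}:=\inf\{d:\mathbb{R}_W(d,\mathcal{A})<\infty\}$ is assumed to exist and be finite (Assumption (II)). Assumption (III): there is an optimal sampling strategy $\mathcal{S}^*$, with kernel $P^{\mathcal{S}^*}_{T|W}$, attaining the infimum and satisfying $\mathbb{E}[\mathsf{d}(W;\mathcal{A}(\mathcal{S}^*(W)))]=d$. $H^{\mathcal{S}^*}_{\mathcal{A}}$ denotes the hypothesis with joint law $P^{\mathcal{A},\mathcal{S}^*}_{H|W}P_W$, where $P^{\mathcal{A},\mathcal{S}^*}_{H|W}(h|w)=\sum_t P^{\mathcal{A}}_{H|T}(h|t)P^{\mathcal{S}^*}_{T|W}(t|w)$. Information density: $\iota_{W;H^{\mathcal{S}^*}_{\mathcal{A}}}(w;h):=\log\frac{\mathrm{d}P_{WH}}{\mathrm{d}(P_W\times P_H)}(w,h)$, computed under this joint law. $\lambda^*_{\mathcal{A}}(d):=-\frac{\mathrm{d}\mathbb{R}_W(d,\mathcal{A})}{\mathrm{d}d}>0$.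 The $\mathcal{A}$-specified $d$-tilted information is $$\jmath_W(w,h,d,\mathcal{A}):=\iota_{W;H^{\mathcal{S}^*}_{\mathcal{A}}}(w;h)+\lambda^*_{\mathcal{A}}(d)\big(\mathsf{d}(w;h)-d\big).$$ *)

(* Defs.v *)
From HB Require Import structures.
From mathcomp Require Import all_boot all_order all_algebra.
From mathcomp Require Import all_classical all_reals all_analysis.
Set Implicit Arguments. Unset Strict Implicit. Unset Printing Implicit Defensive.
Import Order.TTheory GRing.Theory Num.Theory.
Local Open Scope classical_set_scope.
Local Open Scope ring_scope.
Local Open Scope ereal_scope.

(* Training samples are b-bit strings; a training dataset is a finite
   sequence of samples.  Datasets of size n are those with [size t = n];
   there are exactly 2^(b n) of them. *)
Definition Dataset (b : nat) := seq (b.-tuple bool).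

Section Defs.
Variable R : realType.

Definition is_pmf (T : countType) (p : T -> R) : Prop :=
  (forall t, (0 <= p t)%R) /\ \esum_(t in [set: T]) (p t)%:E = 1.

Definition is_kernel (X Y : countType) (K : X -> Y -> R) : Prop :=
  forall x, is_pmf (K x).

Variables (W H : countType) (b : nat).
Variables (PW : W -> R) (A : Dataset b -> H -> R) (dist : W -> H -> R).

Definition compK (S : W -> Dataset b -> R) (w : W) (h : H) : R :=
  fine (\esum_(t in [set: Dataset b]) (S w t * A t h)%:E).

Definition jointWH (S : W -> Dataset b -> R) (w : W) (h : H) : R :=
  (PW w * compK S w h)%R.

Definition margH (S : W -> Dataset b -> R) (h : H) : R :=
  fine (\esum_(w in [set: W]) (jointWH S w h)%:E).

Definition probWH (S : W -> Dataset b -> R) (E : set (W * H)) : \bar R :=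
  \esum_(x in E) (jointWH S x.1 x.2)%:E.

Definition exp_dist (S : W -> Dataset b -> R) : \bar R :=
  \esum_(x in [set: W * H]) (jointWH S x.1 x.2 * dist x.1 x.2)%:E.

(* nonnegative KL summand  p log(p/q) - p + q  (with 0 log 0 = 0, p log(p/0) = +oo);
   summing it for two pmfs gives D(P||Q) in [0,+oo]. *)
Definition kl_term (p q : R) : \bar R :=
  if p == 0%R then q%:E
  else if q == 0%R then +oo
  else (p * ln (p / q) - p + q)%:E.

Definition mutinf (S : W -> Dataset b -> R) : \bar R :=
  \esum_(x in [set: W * H]) kl_term (jointWH S x.1 x.2) (PW x.1 * margH S x.2).

Definition RD (dd : R) : \bar R :=
  ereal_inf [set mutinf S | S in
     [set S | is_kernel S /\ exp_dist S <= dd%:E]].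

Definition dmin : R := inf [set x : R | RD x < +oo].

Definition is_sampling (n : nat) (dd eps : R) (S : W -> Dataset b -> R) : Prop :=
  is_kernel S /\
  (forall w t, S w t != 0%R -> size t = n) /\
  probWH S [set x | (dd < dist x.1 x.2)%R] <= eps%:E.

Definition optimal_sampling (dd : R) (Sstar : W -> Dataset b -> R) : Prop :=
  is_kernel Sstar /\ exp_dist Sstar = dd%:E /\ mutinf Sstar = RD dd.

(* information density of (W, H^{S*}_A); log of the Radon-Nikodym derivative
   p/q, taken to be 0 (hence log = -oo) off the support of P_{WH}. *)
Definition info_density (Sstar : W -> Dataset b -> R) (w : W) (h : H) : \bar R :=
  let p := jointWH Sstar w h in
  let q := (PW w * margH Sstar h)%R in
  if ((0 < p) && (0 < q))%R then (ln (p / q))%:E else -oo.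

Definition tilted_info (Sstar : W -> Dataset b -> R) (lam dd : R) (w : W) (h : H)
  : \bar R :=
  info_density Sstar w h + (lam * (dist w h - dd))%:E.

End Defs.

(* Main.v *)
Require Import Defs.
From HB Require Import structures.
From mathcomp Require Import all_boot all_order all_algebra.
From mathcomp Require Import all_classical all_reals all_analysis.
From mathcomp Require Import ring lra.
Import Order.TTheory GRing.Theory Num.Theory.
Local Open Scope classical_set_scope.
Local Open Scope ring_scope.
Local Open Scope ereal_scope.

Lemma esum_finT (R : realType) (T : finType) (f : T -> \bar R) :
  (forall x, 0 <= f x) -> \esum_(x in [set: T]) f x = \sum_(x : T) f x.
Proof.
move=> f0; rewrite esum_fset; [|exact: finite_finset|by []].
rewrite (fsbigE (enum T)) //.
- by under eq_bigl do rewrite in_setT; rewrite big_enum.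
- exact: enum_uniq.
- by move=> i _; rewrite mem_enum.
Qed.

Lemma le1_pmf (R : realType) (T : countType) (p : T -> R) t :
  is_pmf p -> (p t <= 1)%R.
Proof.
case=> p0 p1.
have : (p t)%:E <= \esum_(x in [set: T]) (p x)%:E.
  apply: esum_ge; exists [set t]; first by split; [exact: finite_set1|].
  by rewrite fsbig_set1.
by rewrite p1 lee_fin.
Qed.

Lemma esum_scale_le (R : realType) (T : choiceType) (I : set T) (f : T -> R)
  (k B : R) : (0 <= k)%R -> \esum_(x in I) (f x)%:E <= B%:E ->
  \esum_(x in I) (k * f x)%:E <= (k * B)%:E.
Proof.
move=> k0 hB; apply: ge_ereal_sup => _ [X [finX XI] <-].
rewrite fsumEFin// lee_fin -mulr_fsumr ler_wpM2l//.
rewrite -lee_fin -fsumEFin//; apply: le_trans hB.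
by apply: ereal_sup_ubound; exists X.
Qed.

Lemma compK_le (R : realType) (W H : countType) (b : nat)
  (A : Dataset b -> H -> R) (S : W -> Dataset b -> R) (n : nat) w h :
  is_kernel A -> is_kernel S -> (forall t, S w t != 0%R -> size t = n) ->
  (compK A S w h <= \sum_(u : n.-tuple (b.-tuple bool)) A (tval u) h)%R.
Proof.
move=> kA kS hsz.
have A0 t : (0 <= A t h)%R by case: (kA t).
have S0 t : (0 <= S w t)%R by case: (kS w).
set aa := (\sum_(u : n.-tuple (b.-tuple bool)) A (tval u) h)%R.
have aa0 : (0 <= aa)%R by apply: sumr_ge0.
pose Tn := [set t : Dataset b | size t = n].
have hS : \esum_(t in [set: Dataset b]) (S w t * A t h)%:E <= aa%:E.
  rewrite (eq_esum (b := fun t => if t \in Tn then (S w t * A t h)%:E else 0));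
    last first.
    move=> t _; case: ifPn => // tn.
    case: (eqVneq (S w t) 0%R) => [->|/hsz st]; first by rewrite mul0r.
    by move: tn; rewrite notin_setE.
  rewrite -esum_mkcond.
  have -> : Tn = (@tval n _) @` setT.
    apply/seteqP; split => t.
    - move=> /= st; have st' : size t == n by apply/eqP.
      by exists (Tuple st').
    - by case=> u _ <-; exact: size_tuple.
  rewrite esum_image; last by move=> x y _ _; apply: val_inj.
  rewrite esum_finT; last by move=> u; rewrite lee_fin mulr_ge0.
  rewrite /aa -sumEFin lee_sum // => u _; rewrite lee_fin ler_piMl//.
  by apply: le1_pmf; apply: kS.
move: hS; rewrite /compK; by case: (esum _ _) => // r; rewrite lee_fin.
Qed.

Lemma sum_aa (R : realType) (H : countType) (b n : nat)
  (A : Dataset b -> H -> R) : is_kernel A ->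
  \esum_(h in [set: H]) (\sum_(u : n.-tuple (b.-tuple bool)) A (tval u) h)%:E
  <= ((2 ^ (b * n))%:R)%:E.
Proof.
move=> kA.
under eq_esum do rewrite -sumEFin.
rewrite esum_sum; last by move=> h u _ _; rewrite lee_fin; case: (kA (tval u)).
under eq_bigr do rewrite (proj2 (kA _)).
rewrite sumEFin sumr_const card_tuple card_tuple card_bool lee_fin.
by rewrite expnM.
Qed.

Theorem theorem1 (R : realType) (W H : countType) (b : nat)
  (PW : W -> R) (A : Dataset b -> H -> R) (dist : W -> H -> R)
  (Sstar : W -> Dataset b -> R) (lam d : R) (n : nat) (eps : R)
  (S : W -> Dataset b -> R) :
  (0 < b)%N ->
  is_pmf PW ->
  is_kernel A ->
  (exists M : R, forall w h, (0 <= dist w h <= M)%R) ->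
  [set x : R | RD PW A dist x < +oo] !=set0 ->
  (dmin PW A dist < d)%R ->
  optimal_sampling PW A dist d Sstar ->
  is_derive d 1%R (fun x => fine (RD PW A dist x)) (- lam)%R ->
  (0 < lam)%R ->
  (0 < n)%N ->
  (0 <= eps <= 1)%R ->
  is_sampling PW A dist n d eps S ->
  ereal_sup [set probWH PW A S
                 [set x | ((b * n)%:R + gamma)%:E
                          <= tilted_info PW A dist Sstar lam d x.1 x.2]
                 - (expR (- gamma))%:E
             | gamma in [set gamma : R | (0 <= gamma)%R]]
    <= eps%:E.
Proof.
move=> b0 pW kA _ _ _ [kSs _] _ lam0 _ _ [kS [hsz hD]].
apply: ge_ereal_sup => _ [g g0 <-].
have PW0 w : (0 <= PW w)%R by case: pW.
have A0 t h : (0 <= A t h)%R by case: (kA t).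
have S0 w t : (0 <= S w t)%R by case: (kS w).
have Ss0 w t : (0 <= Sstar w t)%R by case: (kSs w).
have K0 (T : W -> Dataset b -> R) w h : (forall w t, 0 <= T w t)%R ->
    (0 <= compK A T w h)%R.
  move=> T0; apply: fine_ge0; apply: esum_ge0 => t _.
  by rewrite lee_fin mulr_ge0.
have J0 (T : W -> Dataset b -> R) w h : (forall w t, 0 <= T w t)%R ->
    (0 <= jointWH PW A T w h)%R.
  by move=> T0; rewrite mulr_ge0 // K0.
have M0 h : (0 <= margH PW A Sstar h)%R.
  by apply: fine_ge0; apply: esum_ge0 => w _; rewrite lee_fin J0.
pose c := expR (- ((b * n)%:R + g)).
pose aa h := (\sum_(u : n.-tuple (b.-tuple bool)) A (tval u) h)%R.
have aa0 h : (0 <= aa h)%R by apply: sumr_ge0.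
pose G (x : W * H) :=
  (c * aa x.2 * (jointWH PW A Sstar x.1 x.2 / margH PW A Sstar x.2))%R.
have G0 x : (0 <= G x)%R.
  rewrite /G; apply: mulr_ge0; first by apply: mulr_ge0; rewrite ?expR_ge0.
  by apply: divr_ge0; rewrite ?J0.
rewrite leeBlDr //.
rewrite /probWH (esumID [set x | (d < dist x.1 x.2)%R]); last first.
  by move=> x _; rewrite lee_fin J0.
apply: leeD.
  apply: le_trans hD; rewrite /probWH esum_mkcondl.
  by apply: le_esum => x _; case: ifPn => // _; rewrite lee_fin J0.
rewrite esum_mkcond.
apply: (@le_trans _ _ (\esum_(x in [set: W * H]) (G x)%:E)).
  apply: le_esum => -[w h] _ /=.
  case: ifPn => [|_]; last by rewrite lee_fin.
  rewrite in_setI => /andP[/set_mem hE /set_mem hnD].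
  move: hE hnD => /= hE /negP; rewrite -leNgt => hdd.
  move: hE; rewrite /tilted_info /info_density.
  case: ifPn => [/andP[p0 q0]|_]; last by [].
  rewrite -EFinD lee_fin => hle.
  have hlam : (lam * (dist w h - d) <= 0)%R.
    by apply: mulr_ge0_le0; [exact: ltW|rewrite subr_le0].
  have hl : ((b * n)%:R + g <= ln (jointWH PW A Sstar w h /
                                    (PW w * margH PW A Sstar h)))%R.
    by apply: (le_trans hle); rewrite gerDl.
  set p := jointWH PW A Sstar w h in p0 hle hl *.
  set m := margH PW A Sstar h in q0 hle hl *.
  have PWp : (0 < PW w)%R.
    rewrite lt0r PW0 andbT; apply: contraTneq q0 => ->; by rewrite mul0r ltxx.
  have mp : (0 < m)%R.
    rewrite lt0r M0 andbT; apply: contraTneq q0 => ->; by rewrite mulr0 ltxx.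
  have pq : (0 < p / (PW w * m))%R by rewrite divr_gt0.
  have ex : (expR ((b * n)%:R + g) <= p / (PW w * m))%R.
    apply: (le_trans (y := expR (ln (p / (PW w * m))))); first by rewrite ler_expR.
    by rewrite lnK // posrE.
  have e1 : (c * expR ((b * n)%:R + g) = 1)%R by rewrite /c -expRD addNr expR0.
  have r1 : (1 <= c * (p / (PW w * m)))%R.
    by rewrite -e1 ler_wpM2l // expR_ge0.
  have Kle := @compK_le R W H b A S n w h kA kS (hsz w).
  have ep : (p / m = PW w * (p / (PW w * m)))%R.
    field; apply/andP; split; by rewrite gt_eqF.
  rewrite lee_fin /G /= ep /jointWH.
  apply: (le_trans (y := (PW w * aa h)%R)); first by rewrite ler_wpM2l.
  rewrite (_ : (c * aa h * (PW w * (p / (PW w * m))) =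
                 PW w * aa h * (c * (p / (PW w * m))))%R); last by ring.
  by rewrite ler_peMr // mulr_ge0.
rewrite (reindex_esum [set: H * W] [set: W * H] (fun y => (y.2, y.1))); last first.
  split.
  - by move=> y _.
  - by move=> [x1 x2] [y1 y2] _ _ /= [-> ->].
  - by move=> [w h] _; exists (h, w).
have -> : [set: H * W] = [set: H] `*`` (fun=> [set: W]) by apply/seteqP; split.
rewrite -(esum_esum (a := fun h w => (G (w, h))%:E)); last by move=> *; rewrite lee_fin.
apply: (@le_trans _ _ (\esum_(h in [set: H]) (c * aa h)%:E)).
  apply: le_esum => h _.
  case: (eqVneq (margH PW A Sstar h) 0%R) => m0.
    rewrite esum1; first by rewrite lee_fin mulr_ge0 ?expR_ge0.
    by move=> w _; rewrite /G /= m0 invr0 !mulr0.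
  have hm : \esum_(w in [set: W]) (jointWH PW A Sstar w h)%:E
            = (margH PW A Sstar h)%:E.
    move: m0; rewrite /margH.
    by case: (esum _ _) => [r||] /=; rewrite ?eqxx.
  have := @esum_scale_le R W [set: W] (fun w => jointWH PW A Sstar w h)
    (c * aa h / margH PW A Sstar h) (margH PW A Sstar h).
  rewrite (divfK m0) => hs.
  apply: le_trans (hs _ _); last by rewrite hm.
    apply: le_esum => w _; rewrite lee_fin le_eqVlt; apply/orP; left; apply/eqP.
    rewrite /G /=; ring.
  by rewrite divr_ge0 // mulr_ge0 ?expR_ge0.
have hs := @esum_scale_le R H [set: H] aa c _ (expR_ge0 _) (@sum_aa R H b n A kA).
apply: (le_trans hs).
rewrite lee_fin /c opprD expRD mulrAC ler_piMl ?expR_ge0 //.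
rewrite expRN mulrC ler_pdivrMr ?expR_gt0 // mul1r.
rewrite natrX -[X in expR X]mulr1 expRM_natl.
apply: lerXn2r; rewrite ?nnegrE ?expR_ge0 //.
by have := expR_ge1Dx (1 : R); rewrite (_ : 1 + 1 = 2%:R)%R.
Qed.
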